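(* For every $t\in\mathbb{N}$ there exists $n_0(t)$ such that for all $n\ge n_0(t)$: if $\mathcal{F},\mathcal{G}\subseteq\mathcal{M}_{2n}$ are $t$-cross-intersecting, then \[|\mathcal{F}|\cdot|\mathcal{G}| \le \big((2(n-t)-1)!!\big)^2.\]
   Context: $\mathcal{M}_{2n}$ is the set of perfect matchings of the complete graph $K_{2n}$ (each a set of $n$ edges). Two families $\mathcal{F},\mathcal{G}\subseteq\mathcal{M}_{2n}$ are $t$-cross-intersecting if $|m\cap m'|\ge t$ for all $m\in\mathcal{F}$, $m'\in\mathcal{G}$. $(2k-1)!!=1\cdot3\cdots(2k-1)$. *)

(* Defs.v *)
From mathcomp Require Import all_boot.
Unset Printing Implicit Defensive.

(* Vertex set of K_{2n} is 'I_(2n); an edge is a 2-element subset. *)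
Definition is_perfect_matching (n : nat) (m : {set {set 'I_(2 * n)}}) : bool :=
  [&& [forall e in m, #|e| == 2],
      [forall e in m, forall f in m, (e != f) ==> [disjoint e & f]] &
      [forall v : 'I_(2 * n), exists e in m, v \in e]].

Definition matchings (n : nat) : {set {set {set 'I_(2 * n)}}} :=
  [set m | is_perfect_matching n m].

Definition cross_intersecting (n t : nat) (F G : {set {set {set 'I_(2 * n)}}}) : Prop :=
  forall m m', m \in F -> m' \in G -> t <= #|m :&: m'|.

(* odd_dfact k = (2k-1)!! = 1 * 3 * ... * (2k-1);  odd_dfact 0 = 1 = (-1)!!. *)
Definition odd_dfact (k : nat) : nat := \prod_(i < k) (2 * i + 1).

(* Main.v *)
Require Import Defs.
From mathcomp Require Import all_boot.
From mathcomp Require Import zify ring.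
Unset Strict Implicit.

Set Implicit Arguments.

Definition pmV (T : finType) (V : {set T}) (m : {set {set T}}) : bool :=
  [&& [forall e in m, (#|e| == 2) && (e \subset V)],
      [forall e in m, forall f in m, (e != f) ==> [disjoint e & f]] &
      [forall v in V, exists e in m, v \in e]].

Lemma odd_dfactS k : odd_dfact k.+1 = odd_dfact k * (2 * k + 1).
Proof. by rewrite /odd_dfact big_ord_recr. Qed.

Lemma pmV_edge T (V : {set T}) m e : pmV V m -> e \in m -> (#|e| == 2) && (e \subset V).
Proof. by case/and3P => /forall_inP H _ _ /H. Qed.

Lemma pmV_disj T (V : {set T}) m e f : pmV V m -> e \in m -> f \in m -> e != f -> [disjoint e & f].
Proof. by case/and3P => _ /forall_inP H _ /H /forall_inP H2 /H2 /implyP. Qed.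

Lemma pmV_cov T (V : {set T}) m v : pmV V m -> v \in V -> exists2 e, e \in m & v \in e.
Proof. by case/and3P => _ _ /forall_inP H /H /exists_inP. Qed.

Lemma pmV0 T m : pmV (set0 : {set T}) m -> m = set0.
Proof.
move=> H; apply/setP => e; rewrite inE; apply/negP => em.
case/andP: (pmV_edge H em) => /eqP c2; rewrite subset0 => /eqP e0.
by rewrite e0 cards0 in c2.
Qed.

Lemma pmV_restrict T (V : {set T}) m v u :
  pmV V m -> [set v; u] \in m -> pmV (V :\: [set v; u]) (m :\ [set v; u]).
Proof.
move=> H vu; apply/and3P; split.
- apply/forall_inP => e; rewrite !inE => /andP [ne em].
  case/andP: (pmV_edge H em) => -> /= sV.
  have dj := pmV_disj H em vu ne.
  apply/subsetP => x xe; rewrite inE (subsetP sV) // andbT.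
  by rewrite (disjointFr dj xe).
- apply/forall_inP => e; rewrite inE => /andP [_ em]; apply/forall_inP => f;
  rewrite inE => /andP [_ fm]; apply/implyP => ef; exact: pmV_disj H em fm ef.
- apply/forall_inP => x; rewrite inE => /andP [xn xV].
  case: (pmV_cov H xV) => e em xe; apply/exists_inP; exists e => //.
  rewrite !inE em andbT; apply/negP => /eqP E; subst e.
  by rewrite xe in xn.
Qed.

Lemma card_bigcup_leq (I T : finType) (P : {pred I}) (F : I -> {set T}) :
  #|\bigcup_(i in P) F i| <= \sum_(i in P) #|F i|.
Proof.
elim/big_rec2: _ => [|i x y _ H]; first by rewrite cards0.
by apply: leq_trans (leq_card_setU _ _) _; rewrite leq_add2l.
Qed.

Lemma pm_count (T : finType) k : forall (V : {set T}), #|V| = 2 * k ->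
  #|[set m | pmV V m]| <= odd_dfact k.
Proof.
elim: k => [|k IH] V cV.
  have -> : V = set0 by apply/eqP; rewrite -cards_eq0 cV.
  rewrite /odd_dfact big_ord0.
  apply: leq_trans (_ : #|[set (set0 : {set {set T}})]| <= 1); last by rewrite cards1.
  apply: subset_leq_card; apply/subsetP => m; rewrite !inE => /pmV0 ->; by [].
have : V != set0 by rewrite -card_gt0 cV; lia.
case/set0Pn => v vV.
have sub : [set m | pmV V m] \subset
   \bigcup_(u in V :\ v) [set m | pmV V m & [set v; u] \in m].
  apply/subsetP => m; rewrite inE => pm.
  case: (pmV_cov pm vV) => e em ve.
  case/andP: (pmV_edge pm em) => /cards2P [x [y [xy E]]] sV.
  have [u [uv Eu]] : exists u, u != v /\ e = [set v; u].
    move: ve; rewrite E !inE => /orP [] /eqP xv; subst.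
      by apply: (ex_intro _ y); split => //; rewrite eq_sym.
    by apply: (ex_intro _ x); split => //; rewrite setUC.
  apply/bigcupP; exists u; last by rewrite inE pm -Eu.
  rewrite !inE uv /=; apply: (subsetP sV); rewrite Eu !inE eqxx orbT //.
apply: leq_trans (subset_leq_card sub) _.
apply: leq_trans (card_bigcup_leq _ _) _.
apply: leq_trans (_ : \sum_(u in V :\ v) odd_dfact k <= _).
  apply: leq_sum => u; rewrite !inE => /andP [uv uV].
  set A := [set m | _ & _].
  have cV' : #|V :\: [set v; u]| = 2 * k.
    rewrite cardsD cV; have -> : V :&: [set v; u] = [set v; u].
      by apply/setIidPr; apply/subsetP => x; rewrite !inE => /orP [] /eqP ->.
    by rewrite cards2 eq_sym uv; lia.
  apply: leq_trans (IH _ cV').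
  rewrite -(@card_in_imset _ _ (fun m => m :\ [set v; u]) A).
    apply: subset_leq_card; apply/subsetP => x /imsetP [m]; rewrite !inE => /andP [pm vum] ->.
    exact: pmV_restrict.
  move=> m1 m2; rewrite !inE => /andP [_ h1] /andP [_ h2] E.
  by rewrite -(setD1K h1) -(setD1K h2) E.
rewrite sum_nat_const odd_dfactS mulnC; apply: leq_mul => //.
rewrite (cardsD1 v V) vV in cV; lia.
Qed.

Set Implicit Arguments.

Lemma pmV_triv T (V : {set T}) m : pmV V m -> trivIset m.
Proof. move=> H; apply/trivIsetP => e f em fm; exact: pmV_disj H em fm. Qed.

Lemma pmV_sum T (V : {set T}) m (S : {set {set T}}) : pmV V m -> S \subset m -> #|cover S| = 2 * #|S|.
Proof.
move=> H sS; have tS : trivIset S := trivIsetS sS (pmV_triv H).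
move: tS; rewrite /trivIset => /eqP <-.
rewrite (eq_bigr (fun _ => 2)); first by rewrite sum_nat_const mulnC.
move=> e eS; by case/andP: (pmV_edge H (subsetP sS e eS)) => /eqP.
Qed.

Lemma pmV_card T (V : {set T}) m : pmV V m -> 2 * #|m| <= #|V|.
Proof.
move=> H; rewrite -(pmV_sum H (subxx m)); apply: subset_leq_card.
apply/bigcupsP => e em; by case/andP: (pmV_edge H em).
Qed.

Lemma pmV_restrictS T (V : {set T}) m (S : {set {set T}}) :
  pmV V m -> S \subset m -> pmV (V :\: cover S) (m :\: S).
Proof.
move=> H sS; apply/and3P; split.
- apply/forall_inP => e; rewrite !inE => /andP [ne em].
  case/andP: (pmV_edge H em) => -> /= sV.
  apply/subsetP => x xe; rewrite inE (subsetP sV) // andbT.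
  apply/negP => /bigcupP [f fS xf].
  have ef : e != f by apply/negP => /eqP E; subst; rewrite fS in ne.
  have dj := pmV_disj H em (subsetP sS f fS) ef.
  by rewrite (disjointFr dj xe) in xf.
- apply/forall_inP => e; rewrite inE => /andP [_ em]; apply/forall_inP => f;
  rewrite inE => /andP [_ fm]; apply/implyP => ef; exact: pmV_disj H em fm ef.
- apply/forall_inP => x; rewrite inE => /andP [xn xV].
  case: (pmV_cov H xV) => e em xe; apply/exists_inP; exists e => //.
  rewrite !inE em andbT; apply/negP => eS.
  by move/negP: xn; apply; apply/bigcupP; exists e.
Qed.

Lemma setUDsub (T : finType) (A B : {set T}) : A \subset B -> A :|: (B :\: A) = B.
Proof.
move=> sAB; apply/setP => x; rewrite !inE.
by case xA: (x \in A); rewrite ?(subsetP sAB x xA) //= andbT.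
Qed.

Lemma pm_count_sub (T : finType) (V : {set T}) k (S : {set {set T}}) :
  #|V| = 2 * k ->
  #|[set m | pmV V m & S \subset m]| <= odd_dfact (k - #|S|).
Proof.
move=> cV; set A := [set m | _ & _].
have [->|/set0Pn [m0]] := eqVneq A set0; first by rewrite cards0.
rewrite inE => /andP [pm0 sS0].
have cC := pmV_sum pm0 sS0.
have CV : cover S \subset V.
  apply/bigcupsP => e eS; by case/andP: (pmV_edge pm0 (subsetP sS0 e eS)).
have cS : #|S| <= k.
  have := pmV_card pm0; have := subset_leq_card sS0; lia.
have cV' : #|V :\: cover S| = 2 * (k - #|S|).
  rewrite cardsD (setIidPr CV) cC cV; lia.
apply: leq_trans (pm_count cV').
rewrite -(@card_in_imset _ _ (fun m => m :\: S) A).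
  apply: subset_leq_card; apply/subsetP => x /imsetP [m]; rewrite !inE => /andP [pm sm] ->.
  exact: pmV_restrictS.
move=> m1 m2; rewrite !inE => /andP [_ h1] /andP [_ h2] E.
by rewrite -(setUDsub h1) -(setUDsub h2) E.
Qed.

Unset Implicit Arguments.


Definition star n (S : {set {set 'I_(2*n)}}) : {set {set {set 'I_(2*n)}}} :=
  [set m in matchings n | S \subset m].

Lemma pm_of n m : m \in matchings n -> pmV [set: 'I_(2*n)] m.
Proof.
rewrite inE => /and3P [H1 H2 H3]; apply/and3P; split => //.
- apply/forall_inP => e /(forall_inP H1) ->; exact: subsetT.
- apply/forall_inP => v _; exact: (forallP H3).
Qed.

Lemma star_count n S : #|star n S| <= odd_dfact (n - #|S|).
Proof.
have cV : #|[set: 'I_(2*n)]| = 2 * n by rewrite cardsT card_ord.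
apply: leq_trans (pm_count_sub S cV).
apply: subset_leq_card; apply/subsetP => m; rewrite inE => /andP [mm sm].
by rewrite inE sm andbT; exact: pm_of.
Qed.

Lemma match_card n m : m \in matchings n -> #|m| <= n.
Proof.
move/pm_of/pmV_card; rewrite cardsT card_ord; lia.
Qed.

Lemma odd_dfact_pos k : 0 < odd_dfact k.
Proof. rewrite /odd_dfact; apply: prodn_gt0 => i; lia. Qed.

Lemma odd_dfact_mono a b : a <= b -> odd_dfact a <= odd_dfact b.
Proof.
elim: b => [|b IH]; first by rewrite leqn0 => /eqP ->.
rewrite leq_eqVlt => /orP [/eqP -> //| ]; rewrite ltnS => /IH H.
rewrite odd_dfactS; apply: leq_trans H _; apply: leq_pmulr; lia.
Qed.

Lemma star_count_le n (S : {set {set 'I_(2*n)}}) k : k <= #|S| -> #|star n S| <= odd_dfact (n - k).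
Proof.
move=> kS; apply: leq_trans (star_count n S) _; apply: odd_dfact_mono; lia.
Qed.

Lemma ffact_le_exp a k : a ^_ k <= a ^ k.
Proof.
rewrite ffact_prod; have -> : a ^ k = \prod_(i < k) a by rewrite prod_nat_const card_ord.
apply: leq_prod => i _; lia.
Qed.

Lemma bin_le_exp a k : 'C(a, k) <= a ^ k.
Proof.
apply: leq_trans (ffact_le_exp a k); rewrite -bin_ffact; apply: leq_pmulr.
exact: fact_gt0.
Qed.

Lemma val_imset_sub (T : finType) (B A : {set T}) : A \subset B ->
  [set val x | x in [set x : {x : T | x \in B} | val x \in A]] = A.
Proof.
move=> AB; apply/eqP; rewrite eqEsubset; apply/andP; split; apply/subsetP => x.
  by case/imsetP => y; rewrite inE => yA ->.
move=> xA; have xB : x \in B by exact: (subsetP AB).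
by apply/imsetP; exists (exist _ x xB); rewrite ?inE.
Qed.

Lemma ksub_card (T : finType) (B : {set T}) k :
  #|[set A in powerset B | #|A| == k]| <= #|B| ^ k.
Proof.
pose sB := {x : T | x \in B}.
set D := [set A : {set sB} | #|A| == k].
have -> : [set A in powerset B | #|A| == k] = (fun A : {set sB} => val @: A) @: D.
  apply/setP => A; rewrite !inE; apply/andP/imsetP.
    case=> AB /eqP cA.
    exists [set x : sB | val x \in A]; last by rewrite val_imset_sub.
    by rewrite inE -cA -{2}(@val_imset_sub T B A AB) card_imset //; exact: val_inj.
  case=> A'; rewrite inE => /eqP cA ->; split.
    apply/subsetP => x /imsetP [y _ ->]; exact: (valP y).
  by rewrite card_imset ?cA //; exact: val_inj.
apply: leq_trans (leq_imset_card _ _) _.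
rewrite card_draws card_sig; exact: bin_le_exp.
Qed.

Unset Implicit Arguments.

Lemma sub_of_card (T : finType) (X : {set T}) k : k <= #|X| ->
  exists2 A : {set T}, A \subset X & #|A| = k.
Proof.
elim: k => [|k IH] kX; first by exists set0; rewrite ?sub0set ?cards0.
case: (IH (ltnW kX)) => A AX cA.
have : X :\: A != set0.
  rewrite -card_gt0 cardsD (setIidPr AX); lia.
case/set0Pn => x; rewrite inE => /andP [xA xX].
exists (x |: A); first by rewrite subUset sub1set xX AX.
by rewrite cardsU1 xA cA.
Qed.

Notation Ed n := {set 'I_(2*n)}.
Notation Mt n := {set {set 'I_(2*n)}}.
Notation Fam n := {set {set {set 'I_(2*n)}}}.

Definition subF n (F : {set {set {set 'I_(2*n)}}}) (S : {set {set 'I_(2*n)}}) :=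
  [set m in F | S \subset m].

Lemma subF_count n (F : Fam n) (S : Mt n) : F \subset matchings n -> #|subF n F S| <= odd_dfact (n - #|S|).
Proof.
move=> FM; apply: leq_trans (star_count n S); apply: subset_leq_card.
apply/subsetP => m; rewrite inE => /andP [mF Sm]; rewrite inE Sm andbT; exact: (subsetP FM m mF).
Qed.

Definition pok n r q (F : {set {set {set 'I_(2*n)}}})
  (p : {set {set 'I_(2*n)}} * {set {set {set 'I_(2*n)}}}) : Prop :=
  [/\ p.2 \subset F, p.2 != set0, #|p.1| < q,
      (forall m, m \in p.2 -> p.1 \subset m) &
      (forall e, e \notin p.1 -> r * #|[set m in p.2 | e \in m]| <= #|p.2|)].

Lemma decomp n r q Rb : 0 < r -> r ^ q * odd_dfact (n - q) <= Rb ->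
  forall K (F : {set {set {set 'I_(2*n)}}}), #|F| < K -> F \subset matchings n ->
  exists D : seq ({set {set 'I_(2*n)}} * {set {set {set 'I_(2*n)}}}),
  exists R : {set {set {set 'I_(2*n)}}},
   [/\ (forall p, p \in D -> pok n r q F p), #|R| <= Rb &
       forall m, m \in F -> m \notin R -> exists2 p, p \in D & m \in p.2].
Proof.
move=> r0 hRb; elim=> [|K IH] F; first by [].
move=> cF FM.
case: (leqP #|F| Rb) => hF.
  by exists [::], F; split => // m ->.
pose val S := #|subF n F S| * r ^ #|S|.
have P0 : #|(set0 : {set {set 'I_(2*n)}})| <= q by rewrite cards0.
case: (@arg_maxnP _ set0 (fun S : {set {set 'I_(2*n)}} => #|S| <= q) val P0) => S Sq Smax.
have hF0 : #|F| <= val S.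
  have := Smax set0 P0; rewrite /val cards0 expn0 muln1.
  have -> : subF n F set0 = F by apply/setP => m; rewrite !inE sub0set andbT.
  by [].
have Sq' : #|S| < q.
  rewrite ltn_neqAle Sq andbT; apply/negP => /eqP ES.
  have := subF_count n F S FM; rewrite ES => H.
  have : val S <= r ^ q * odd_dfact (n - q) by rewrite /val ES mulnC leq_mul2l H orbT.
  lia.
set P := subF n F S.
have PF : P \subset F by apply/subsetP => m; rewrite inE => /andP [].
have Pn0 : P != set0.
  rewrite -card_gt0; case: (posnP #|P|) => [P0'|//].
  move: hF0; rewrite /val -/P P0' mul0n; lia.
have cF' : #|F :\: P| < K.
  rewrite cardsD (setIidPr PF); move: Pn0; rewrite -card_gt0; lia.
have F'M : F :\: P \subset matchings n.
  by apply: subset_trans FM; apply: subsetDl.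
case: (IH _ cF' F'M) => D [R [HD HR Hcov]].
exists ((S, P) :: D), R; split => //.
- move=> p; rewrite inE => /orP [/eqP -> | pD].
    split => //=.
      by move=> m; rewrite inE => /andP [].
    move=> e eS.
    have Se : #|e |: S| <= q by rewrite cardsU1 eS /= add1n.
    have := Smax _ Se; rewrite /val cardsU1 eS expnS /= => H.
    have -> : [set m in P | e \in m] = subF n F (e |: S).
      apply/setP => m; rewrite !inE subUset sub1set.
      by case: (m \in F); case: (S \subset m); case: (e \in m).
    have rS : 0 < r ^ #|S| by rewrite expn_gt0 r0.
    by move: H; rewrite mulnA (mulnC _ r) leq_pmul2r.
  case: (HD p pD) => H1 H2 H3 H4 H5; split => //.
  apply: subset_trans H1 _; exact: subsetDl.
- move=> m mF mR.
  case mP: (m \in P).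
    by apply: (ex_intro2 _ _ (S, P)); [rewrite inE eqxx | rewrite /= mP].
  have mF' : m \in F :\: P by rewrite inE mP mF.
  case: (Hcov m mF' mR) => p pD mp.
  by apply: (ex_intro2 _ _ p) => //; rewrite inE pD orbT.
Qed.

Unset Implicit Arguments.

Lemma card_sep (T : finType) (A : {set T}) (p : pred T) :
  #|[set x in A | p x]| = \sum_(x in A) (p x : nat).
Proof.
rewrite -sum1_card (eq_bigl (fun x => (x \in A) && p x)); last by move=> x; rewrite inE.
rewrite big_mkcondr /=; apply: eq_bigr => x _; by case: (p x).
Qed.

Lemma sum_edges n (P : Fam n) : P \subset matchings n ->
  \sum_(e : Ed n) #|[set m in P | e \in m]| <= n * #|P|.
Proof.
move=> PM.
rewrite (eq_bigr (fun e => \sum_(m in P) (e \in m : nat))); last by move=> e _; rewrite card_sep.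
rewrite exchange_big /=.
rewrite (eq_bigr (fun m : Mt n => #|m|)); last first.
  move=> m _; rewrite -sum1_card [RHS]big_mkcond /=; apply: eq_bigr => e _; by case: (e \in m).
apply: (@leq_trans (\sum_(m in P) n)).
  apply: leq_sum => m mP; exact: match_card (subsetP PM m mP).
by rewrite sum_nat_const [X in X <= _]mulnC.
Qed.

Lemma cross_core n r q t (F G : Fam n) p p' :
  F \subset matchings n -> G \subset matchings n -> cross_intersecting n t F G ->
  pok n r q F p -> pok n r q G p' -> n + q < r -> t <= #|p.1 :&: p'.1|.
Proof.
case: p => S P; case: p' => S' P' FM GM cr [/= PF Pn Sq PS Psp] [/= PG Pn' Sq' PS' Psp'] rbig.
rewrite leqNgt; apply/negP => small.
pose Pe e := [set m in P | e \in m].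
pose Pe' e := [set m in P' | e \in m].
have cover : setX P P' \subset
  (\bigcup_(e in S :\: S') setX P (Pe' e)) :|: (\bigcup_(e in ~: S) setX (Pe e) (Pe' e)).
  apply/subsetP => [[m m']]; rewrite inE /= => /andP [mP m'P].
  have := cr m m' (subsetP PF m mP) (subsetP PG m' m'P) => big.
  have : ~~ (m :&: m' \subset S :&: S').
    apply/negP => sub; by move: (leq_trans big (subset_leq_card sub)); rewrite leqNgt small.
  case/subsetPn => e; rewrite !inE => /andP [em em'] /nandP [eS | eS'].
    apply/orP; right; apply/bigcupP; exists e; rewrite !inE ?eS //.
    by rewrite mP em m'P em'.
  case eS: (e \in S).
    apply/orP; left; apply/bigcupP; exists e; rewrite !inE ?eS ?eS' //.
    by rewrite mP m'P em'.
  apply/orP; right; apply/bigcupP; exists e; rewrite !inE ?eS //.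
  by rewrite mP em m'P em'.
have := subset_leq_card cover; rewrite cardsX => H1.
have H2 := leq_trans H1 (leq_card_setU _ _).
have H3 : r * (#|P| * #|P'|) <= #|S| * (#|P| * #|P'|) + #|P| * (n * #|P'|).
  apply: leq_trans (leq_mul (leqnn r) H2) _.
  rewrite mulnDr; apply: leq_add.
    apply: leq_trans (leq_mul (leqnn r) (card_bigcup_leq _ _)) _.
    rewrite big_distrr /=.
    apply: leq_trans (_ : \sum_(e in S :\: S') (#|P| * #|P'|) <= _).
      apply: leq_sum => e; rewrite inE => /andP [eS' _].
      rewrite cardsX mulnCA leq_mul2l Psp' ?orbT //.
    rewrite sum_nat_const leq_mul2r; apply/orP; right.
    by apply: subset_leq_card; apply: subsetDl.
  apply: leq_trans (leq_mul (leqnn r) (card_bigcup_leq _ _)) _.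
  rewrite big_distrr /=.
  apply: leq_trans (_ : \sum_(e in ~: S) (#|P| * #|Pe' e|) <= _).
    apply: leq_sum => e; rewrite inE => eS.
    rewrite cardsX mulnA leq_mul2r Psp ?orbT //.
  rewrite -big_distrr /= leq_mul2l; apply/orP; right.
  apply: leq_trans (sum_edges _ P' (subset_trans PG GM)).
  by rewrite [X in _ <= X](bigID (fun e => e \in ~: S)) /= leq_addr.
have pos : 0 < #|P| * #|P'| by rewrite muln_gt0 !card_gt0 Pn Pn'.
have : r * (#|P| * #|P'|) <= (q + n) * (#|P| * #|P'|).
  apply: leq_trans H3 _; rewrite [#|P| * (n * _)]mulnCA -mulnDl leq_mul2r.
  by rewrite leq_add2r ltnW ?orbT.
rewrite leq_mul2r; case/orP; lia.
Qed.

Set Implicit Arguments.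

Lemma cover_bound n (F R : Fam n) (TT : {set Mt n}) k :
  F \subset matchings n -> (forall T, T \in TT -> k <= #|T|) ->
  (forall m, m \in F -> m \notin R -> exists2 T, T \in TT & T \subset m) ->
  #|F| <= #|R| + #|TT| * odd_dfact (n - k).
Proof.
move=> FM Tk cov.
have sub : F \subset R :|: \bigcup_(T in TT) star n T.
  apply/subsetP => m mF; rewrite inE; case mR: (m \in R) => //=.
  case: (cov m mF (negbT mR)) => T TT' Tm; apply/bigcupP; exists T => //.
  by rewrite inE Tm andbT (subsetP FM m mF).
apply: leq_trans (subset_leq_card sub) _.
apply: leq_trans (leq_card_setU _ _) _; rewrite leq_add2l.
apply: leq_trans (card_bigcup_leq _ _) _.
apply: leq_trans (_ : \sum_(T in TT) odd_dfact (n - k) <= _).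
  by apply: leq_sum => T /Tk; exact: star_count_le.
by rewrite sum_nat_const.
Qed.

Lemma card_ksub_ex (T : finType) (X : {set T}) k : k <= #|X| ->
  exists2 A, A \in [set A in powerset X | #|A| == k] & A \subset X.
Proof.
move=> kX; case: (@sub_of_card _ X k kX) => A AX cA; exists A => //.
by rewrite inE powersetE AX cA eqxx.
Qed.

Lemma core_bound n r q (F R : Fam n) (D : seq (Mt n * Fam n)) (W : Mt n) k :
  F \subset matchings n ->
  (forall p, p \in D -> pok n r q F p) ->
  (forall m, m \in F -> m \notin R -> exists2 p, p \in D & m \in p.2) ->
  (forall p, p \in D -> k <= #|p.1 :&: W|) ->
  #|F| <= #|R| + #|W| ^ k * odd_dfact (n - k).
Proof.
move=> FM HD cov HW.
apply: leq_trans (cover_bound (TT := [set A in powerset W | #|A| == k]) (k := k) FM _ _) _.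
- by move=> T; rewrite inE => /andP [_ /eqP ->].
- move=> m mF mR; case: (cov m mF mR) => p pD mp.
  case: (card_ksub_ex (HW p pD)) => A; rewrite inE => /andP [_ cA] AS.
  exists A; first by rewrite inE cA andbT powersetE (subset_trans AS (subsetIr _ _)).
  case: (HD p pD) => _ _ _ H _; apply: subset_trans (H m mp).
  by apply: subset_trans AS (subsetIl _ _).
- rewrite leq_add2l leq_mul2r; apply/orP; right.
  exact: ksub_card.
Qed.

Lemma kill n t (m0 : Mt n) (T : Mt n) :
  m0 \in matchings n -> ~~ (T \subset m0) -> #|T| = t ->
  #|[set m in star n T | t <= #|m0 :&: m|]| <= n * odd_dfact (n - t.+1).
Proof.
move=> m0M Tm0 cT.
set A := [set m in _ | _].
have AM : A \subset matchings n.
  by apply/subsetP => m; rewrite !inE => /andP [/andP [mm _] _].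
apply: leq_trans (cover_bound (R := set0) (TT := [set e |: T | e in m0 :\: T]) (k := t.+1) AM _ _) _.
- move=> V /imsetP [e]; rewrite inE => /andP [eT _] ->.
  by rewrite cardsU1 eT cT.
- move=> m; rewrite !inE => /andP [/andP [mM Tm] big] _.
  have : ~~ (m0 :&: m \subset T).
    apply/negP => sub.
    have E : m0 :&: m = T.
      apply/eqP; rewrite eqEcard sub cT big.
      by [].
    by move/negP: Tm0; apply; rewrite -E subsetIl.
  case/subsetPn => e; rewrite inE => /andP [em0 em] eT.
  exists (e |: T); first by apply/imsetP; exists e; rewrite // inE eT em0.
  by rewrite subUset sub1set em Tm.
- rewrite cards0 add0n leq_mul2r; apply/orP; right.
  apply: (leq_trans (leq_imset_card (fun e => e |: T) (m0 :\: T))).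
  apply: leq_trans _ (@match_card n m0 m0M); apply: subset_leq_card; exact: subsetDl.
Qed.

Set Implicit Arguments.

Lemma eq_of_card (E : finType) (A B : {set E}) : A \subset B -> #|B| <= #|A| -> A = B.
Proof. by move=> AB BA; apply/eqP; rewrite eqEcard AB BA. Qed.

Lemma exp_mono a b k : a <= b -> a ^ k <= b ^ k.
Proof. move=> ab; elim: k => // k IH; rewrite !expnS; exact: leq_mul. Qed.

Lemma structure (E : finType) (CF CG : seq {set E}) t q S0 :
  S0 \in CF -> (forall S, S \in CF -> #|S| <= q) ->
  (forall S S', S \in CF -> S' \in CG -> t <= #|S :&: S'|) ->
  exists2 W : {set E}, #|W| <= q + q ^ t * q &
   [\/ forall S', S' \in CG -> t.+1 <= #|S' :&: W|,
       exists2 V : {set E}, t.+1 <= #|V| & (forall S, S \in CF -> V \subset S)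
     | exists2 T : {set E}, #|T| = t & (forall S, S \in CF -> T \subset S) /\
          (forall S', S' \in CG -> T \subset S' \/ t.+1 <= #|S' :&: W|)].
Proof.
move=> S0F Sq cr.
pose Ts := [set T in powerset S0 | #|T| == t].
pose univ (T : {set E}) := all (fun S : {set E} => T \subset S) CF.
pose U := [set T in Ts | univ T].
pose wit (T : {set E}) := nth S0 CF (find (fun S : {set E} => ~~ (T \subset S)) CF).
have witP : forall T, T \in Ts :\: U -> wit T \in CF /\ ~~ (T \subset wit T).
  move=> T; rewrite !inE => /and3P [nu HS Hc]; rewrite HS Hc /= in nu.
  have hs : has (fun S : {set E} => ~~ (T \subset S)) CF.
    by move: nu; rewrite /univ -has_predC.
  split; first by rewrite /wit mem_nth // -has_find.
  exact: (nth_find S0 hs).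
pose W := S0 :|: \bigcup_(T in Ts :\: U) wit T.
exists W.
  apply: leq_trans (leq_card_setU _ _) _; apply: leq_add; first exact: Sq.
  apply: leq_trans (card_bigcup_leq _ _) _.
  apply: leq_trans (_ : \sum_(T in Ts :\: U) q <= _).
    by apply: leq_sum => T /witP [/Sq] .
  rewrite sum_nat_const leq_mul2r; apply/orP; right.
  apply: leq_trans (_ : #|Ts| <= _).
    by apply: subset_leq_card; apply: subsetDl.
  apply: leq_trans (ksub_card _ S0 t) _.
  exact: exp_mono (Sq _ S0F).
have claim : forall S', S' \in CG -> (exists2 T, T \in U & T \subset S') \/ t.+1 <= #|S' :&: W|.
  move=> S' S'G.
  have h := cr _ _ S0F S'G.
  case: (ltnP t #|S0 :&: S'|) => [lt | le].
    right; apply: leq_trans lt _; apply: subset_leq_card.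
    by rewrite setIC; apply: setIS; apply: subsetUl.
  have cT : #|S0 :&: S'| = t by apply/eqP; rewrite eqn_leq le h.
  set T := S0 :&: S'.
  have TTs : T \in Ts by rewrite inE powersetE subsetIl cT eqxx.
  case TU: (T \in U); first by left; exists T => //; exact: subsetIr.
  right.
  have TD : T \in Ts :\: U by rewrite inE TU TTs.
  case: (witP T TD) => wF nsub.
  have h2 := cr _ _ wF S'G.
  have : ~~ (wit T :&: S' \subset T).
    apply/negP => sub; move/negP: nsub; apply.
    have EE : wit T :&: S' = T by apply: eq_of_card => //; rewrite cT.
    by rewrite -{1}EE subsetIl.
  case/subsetPn => x; rewrite inE => /andP [xw xS'] xT.
  apply: leq_trans (_ : #|x |: T| <= _); first by rewrite cardsU1 xT cT.
  apply: subset_leq_card; apply/subsetP => y; rewrite !inE => /orP [/eqP -> | yT].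
    rewrite xS' /=; apply/orP; right; apply/bigcupP; exists T => //.
  case/andP: yT => yS0 yS'; by rewrite yS' yS0.
case: (ltnP 1 #|U|) => [U2 | U1].
  case/card_gt1P: U2 => T1 [T2 [T1U T2U T12]].
  apply: Or32; exists (T1 :|: T2).
    rewrite ltnNge; apply/negP => small.
    move: T1U T2U; rewrite !inE => /andP [/andP [_ /eqP c1] _] /andP [/andP [_ /eqP c2] _].
    have E1 : T1 = T1 :|: T2 by apply: eq_of_card; rewrite ?subsetUl // c1.
    have E2 : T2 = T1 :|: T2 by apply: eq_of_card; rewrite ?subsetUr // c2.
    by move/negP: T12; apply; rewrite {1}E1 -E2.
  move=> S SF; rewrite subUset.
  move: T1U T2U; rewrite !inE => /andP [_ /allP u1] /andP [_ /allP u2].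
  by rewrite u1 ?u2.
case: (posnP #|U|) => [U0 | Upos].
  apply: Or31 => S' S'G; case: (claim S' S'G) => // [[T TU _]].
  by move: U0 => /eqP; rewrite cards_eq0 => /eqP U0; rewrite U0 inE in TU.
have : #|U| == 1 by rewrite eqn_leq U1 Upos.
case/cards1P => T UT.
have TU : T \in U by rewrite UT set11.
move: (TU); rewrite !inE => /andP [/andP [_ /eqP cT] /allP uT].
apply: Or33; exists T => //; split => //.
move=> S' S'G; case: (claim S' S'G) => [[T' T'U T'S]|]; last by right.
by left; move: T'U; rewrite UT inE => /eqP <-.
Qed.

Set Implicit Arguments.

Lemma cover_W n (F R : Fam n) (W : Mt n) k :
  F \subset matchings n ->
  (forall m, m \in F -> m \notin R -> exists2 S : Mt n, k <= #|S :&: W| & S \subset m) ->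
  #|F| <= #|R| + #|W| ^ k * odd_dfact (n - k).
Proof.
move=> FM cov.
apply: leq_trans (cover_bound (TT := [set A in powerset W | #|A| == k]) (k := k) FM _ _) _.
- by move=> T; rewrite inE => /andP [_ /eqP ->].
- move=> m mF mR; case: (cov m mF mR) => S kS Sm.
  case: (card_ksub_ex kS) => A; rewrite inE => /andP [_ cA] AS.
  exists A; first by rewrite inE cA andbT powersetE (subset_trans AS (subsetIr _ _)).
  apply: subset_trans Sm; by apply: subset_trans AS (subsetIl _ _).
- rewrite leq_add2l leq_mul2r; apply/orP; right; exact: ksub_card.
Qed.

Lemma cross_sym n t (F G : Fam n) : cross_intersecting n t F G -> cross_intersecting n t G F.
Proof. by move=> H m m' mG m'F; rewrite setIC; apply: H. Qed.

Lemma trivial_bound n t (F G : Fam n) m0 : m0 \in F -> F \subset matchings n ->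
  G \subset matchings n -> cross_intersecting n t F G ->
  #|G| <= n ^ t * odd_dfact (n - t).
Proof.
move=> m0F FM GM cr.
apply: leq_trans (cover_W (R := set0) (W := m0) (k := t) GM _) _.
  move=> m mG _; exists m => //; rewrite setIC; exact: cr.
rewrite cards0 add0n leq_mul2r; apply/orP; right; apply: exp_mono.
exact: match_card (subsetP FM m0 m0F).
Qed.

Lemma combin n t r q Rb (F G : Fam n) N N1 X Y :
  0 < r -> n + q < r -> r ^ q * odd_dfact (n - q) <= Rb ->
  N = odd_dfact (n - t) -> N1 = odd_dfact (n - t.+1) -> X = q ^ t ->
  Y = (q + q ^ t * q) ^ t.+1 ->
  F \subset matchings n -> G \subset matchings n -> cross_intersecting n t F G ->
  Rb * (n ^ t * N) <= N * N ->
  (Rb + N1) * (Rb + X * N) <= N * N ->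
  (Rb + Y * N1) * (Rb + X * N) <= N * N ->
  (N + Rb) * (n * N1 + (Rb + Y * N1)) <= N * N ->
  n * N1 * (N + (Rb + Y * N1)) <= N * N ->
  #|F| * #|G| <= N * N.
Proof.
move=> r0 rbig hRb EN EN1 EX EY FM GM cr I1 I2 I3 I4 I5.
have [DF [RF [HDF HRF covF]]] := @decomp n r q Rb r0 hRb _ F (ltnSn #|F|) FM.
have [DG [RG [HDG HRG covG]]] := @decomp n r q Rb r0 hRb _ G (ltnSn #|G|) GM.
have crc : forall p p', p \in DF -> p' \in DG -> t <= #|p.1 :&: p'.1|.
  move=> p p' pD p'D; exact: (@cross_core n r q t F G p p' FM GM cr (HDF p pD) (HDG p' p'D) rbig).
case EDF: DF => [|p0 DF'].
  have FR : F \subset RF.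
    apply/subsetP => m mF; apply/negPn/negP => mR.
    by case: (covF m mF mR) => p; rewrite EDF.
  have cF : #|F| <= Rb := leq_trans (subset_leq_card FR) HRF.
  have [->|/set0Pn [m0 m0F]] := eqVneq F set0; first by rewrite cards0.
  have cG := trivial_bound m0F FM GM cr.
  rewrite -EN in cG; apply: leq_trans I1; exact: leq_mul.
case EDG: DG => [|p0' DG'].
  have GR : G \subset RG.
    apply/subsetP => m mG; apply/negPn/negP => mR.
    by case: (covG m mG mR) => p; rewrite EDG.
  have cG : #|G| <= Rb := leq_trans (subset_leq_card GR) HRG.
  have [->|/set0Pn [m0 m0G]] := eqVneq G set0; first by rewrite cards0 muln0.
  have cF := trivial_bound m0G GM FM (cross_sym cr).
  rewrite -EN in cF; apply: leq_trans I1; rewrite mulnC; exact: leq_mul.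
have p0D : p0 \in DF by rewrite EDF mem_head.
have p0'D : p0' \in DG by rewrite EDG mem_head.
have FX : #|F| <= Rb + X * N.
  apply: leq_trans (cover_W (R := RF) (W := p0'.1) (k := t) FM _) _.
    move=> m mF mR; case: (covF m mF mR) => p pD mp.
    case: (HDF p pD) => _ _ _ H _.
    by exists p.1; [exact: crc | exact: H].
  apply: leq_add => //; rewrite EX EN leq_mul2r; apply/orP; right; apply: exp_mono.
  by case: (HDG p0' p0'D) => _ _ /ltnW.
have GX : #|G| <= Rb + X * N.
  apply: leq_trans (cover_W (R := RG) (W := p0.1) (k := t) GM _) _.
    move=> m mG mR; case: (covG m mG mR) => p pD mp.
    case: (HDG p pD) => _ _ _ H _.
    by exists p.1; [rewrite setIC; exact: crc | exact: H].
  apply: leq_add => //; rewrite EX EN leq_mul2r; apply/orP; right; apply: exp_mono.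
  by case: (HDF p0 p0D) => _ _ /ltnW.
have [W cW [Ha | [V cV HV] | [T cT [HTF HTG]]]] :=
  @structure _ [seq p.1 | p <- DF] [seq p.1 | p <- DG] t q p0.1 (map_f _ p0D)
   (fun S SD => match mapP SD with ex_intro2 p pD E => ltac:(rewrite E; case: (HDF p pD) => _ _ /ltnW //) end)
   (fun S S' SD S'D => match mapP SD, mapP S'D with ex_intro2 p pD E, ex_intro2 p' p'D E' =>
        ltac:(rewrite E E'; exact: crc) end).
- have GY : #|G| <= Rb + Y * N1.
    apply: leq_trans (cover_W (R := RG) (W := W) (k := t.+1) GM _) _.
      move=> m mG mR; case: (covG m mG mR) => p pD mp.
      case: (HDG p pD) => _ _ _ H _.
      by exists p.1; [exact: Ha (map_f _ pD) | exact: H].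
    apply: leq_add => //; rewrite EY EN1 leq_mul2r; apply/orP; right; exact: exp_mono.
  apply: leq_trans I3; rewrite mulnC; exact: leq_mul.
- have cF : #|F| <= Rb + N1.
    apply: leq_trans (cover_bound (R := RF) (TT := [set V]) (k := t.+1) FM _ _) _.
    + by move=> T'; rewrite inE => /eqP ->.
    + move=> m mF mR; case: (covF m mF mR) => p pD mp.
      case: (HDF p pD) => _ _ _ H _.
      exists V; first by rewrite inE.
      apply: subset_trans (H m mp); exact: HV (map_f _ pD).
    by rewrite cards1 mul1n EN1 leq_add2r.
  apply: leq_trans I2; exact: leq_mul.
- set ST := star n T.
  have Fout : F :\: ST \subset RF.
    apply/subsetP => m; rewrite inE => /andP [mST mF]; apply/negPn/negP => mR.
    case: (covF m mF mR) => p pD mp.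
    case: (HDF p pD) => _ _ _ H _.
    move/negP: mST; apply; rewrite inE (subsetP FM m mF) /=.
    apply: subset_trans (H m mp); exact: HTF (map_f _ pD).
  have GoutB : #|G :\: ST| <= Rb + Y * N1.
    have GM' : G :\: ST \subset matchings n by apply: subset_trans GM; apply: subsetDl.
    apply: leq_trans (cover_W (R := RG) (W := W) (k := t.+1) GM' _) _.
      move=> m; rewrite inE => /andP [mST mG] mR; case: (covG m mG mR) => p pD mp.
      case: (HDG p pD) => _ _ _ H _.
      exists p.1; last exact: H.
      case: (HTG p.1 (map_f _ pD)) => // Tp.
      exfalso; move/negP: mST; apply; rewrite inE (subsetP GM m mG) /=.
      exact: subset_trans Tp (H m mp).
    apply: leq_add => //; rewrite EY EN1 leq_mul2r; apply/orP; right; exact: exp_mono.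
  have cST : #|ST| <= N by rewrite EN -cT; exact: star_count.
  have Fin : #|F :&: ST| <= N := leq_trans (subset_leq_card (subsetIr _ _)) cST.
  have Gin : #|G :&: ST| <= N := leq_trans (subset_leq_card (subsetIr _ _)) cST.
  have Fo : #|F :\: ST| <= Rb := leq_trans (subset_leq_card Fout) HRF.
  have spF := cardsID ST F; have spG := cardsID ST G.
  have [F0|/set0Pn [m0 hm0]] := eqVneq (F :\: ST) set0.
    rewrite F0 cards0 addn0 in spF.
    have [G0|/set0Pn [m1 hm1]] := eqVneq (G :\: ST) set0.
      rewrite G0 cards0 addn0 in spG.
      by rewrite -spF -spG; exact: leq_mul.
    have /andP [m1ST m1G] : (m1 \notin ST) && (m1 \in G) by rewrite -in_setD.
    have m1M := subsetP GM m1 m1G.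
    have Tm1 : ~~ (T \subset m1) by move: m1ST; rewrite inE m1M.
    have Fk : #|F :&: ST| <= n * N1.
      rewrite EN1; apply: leq_trans (kill m1M Tm1 cT); apply: subset_leq_card.
      apply/subsetP => m /setIP [mF mST]; rewrite inE mST /=.
      rewrite setIC; exact: cr mF m1G.
    apply: leq_trans I5; rewrite -spF -spG; apply: leq_mul => //.
    by apply: leq_add.
  have /andP [m0ST m0F] : (m0 \notin ST) && (m0 \in F) by rewrite -in_setD.
  have m0M := subsetP FM m0 m0F.
  have Tm0 : ~~ (T \subset m0) by move: m0ST; rewrite inE m0M.
  have Gk : #|G :&: ST| <= n * N1.
    rewrite EN1; apply: leq_trans (kill m0M Tm0 cT); apply: subset_leq_card.
    apply/subsetP => m /setIP [mG mST]; rewrite inE mST /=.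
    exact: cr m0F mG.
  apply: leq_trans I4; rewrite -spF -spG; apply: leq_mul; exact: leq_add.
Qed.

Unset Implicit Arguments.

Lemma bern x K : (x + 1 - K) * (x + 1) ^ K <= x ^ K * (x + 1).
Proof.
elim: K => [|K IH]; first by rewrite !expn0 subn0 muln1 mul1n.
have h : (x + 1 - K.+1) * (x + 1) <= x * (x + 1 - K) by nia.
have -> : (x + 1 - K.+1) * (x + 1) ^ K.+1 = ((x + 1 - K.+1) * (x + 1)) * (x + 1) ^ K.
  by rewrite expnS mulnA.
apply: leq_trans (leq_mul h (leqnn _)) _.
rewrite -mulnA [x ^ K.+1]expnS -mulnA; exact: leq_mul.
Qed.

Lemma step_ratio x K : 2 * K <= x + 1 -> (x + 1) ^ K <= 2 * x ^ K.
Proof.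
move=> hK; have := bern x K => H.
have H2 : (x + 1) * (x + 1) ^ K <= 2 * ((x + 1 - K) * (x + 1) ^ K).
  rewrite mulnA; apply: leq_mul => //; lia.
have H3 := leq_trans H2 (leq_mul (leqnn 2) H); rewrite mulnA [(x+1) * _]mulnC in H3.
by rewrite leq_pmul2r in H3; lia.
Qed.

Lemma pow2_sq j : 4 <= j -> j * j <= 2 ^ j.
Proof.
elim: j => // j IH; rewrite leq_eqVlt => /orP [/eqP <- // | ].
rewrite ltnS => hj; have H := IH hj; rewrite expnS.
have : j.+1 * j.+1 <= 2 * (j * j) by nia.
move=> H'; apply: leq_trans H' _; by rewrite leq_mul2l H orbT.
Qed.

Lemma poly_exp C K : exists M0, forall M, M0 <= M -> C * M ^ K <= 2 ^ M.
Proof.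
pose j := 2 * K + C + 4.
exists (2 ^ j).
have base : C * (2 ^ j) ^ K <= 2 ^ (2 ^ j).
  have hC : C <= 2 ^ C by apply: ltnW; apply: ltn_expl.
  apply: leq_trans (leq_mul hC (leqnn _)) _.
  rewrite -expnM -expnD leq_exp2l //.
  have j4 : 4 <= j by rewrite /j; lia.
  apply: leq_trans (pow2_sq j j4); rewrite /j; nia.
have jle : j <= 2 ^ j by apply: ltnW; apply: ltn_expl.
elim=> [|M IH]; first by rewrite leqn0 expn_eq0.
rewrite leq_eqVlt => /orP [/eqP <- // | ]; rewrite ltnS => hM.
have := IH hM => H.
have jK : 2 * K <= j by rewrite /j; lia.
have R : (M + 1) ^ K <= 2 * M ^ K.
  apply: step_ratio; move: jK jle hM; clearbody j; lia.
rewrite expnS -addn1; apply: leq_trans (leq_mul (leqnn C) R) _.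
by rewrite mulnCA leq_mul2l H orbT.
Qed.

Unset Implicit Arguments.

Lemma odd_ratio k j : odd_dfact k * (2 * k + 1) ^ j <= odd_dfact (k + j).
Proof.
elim: j => [|j IH]; first by rewrite expn0 muln1 addn0.
have -> : k + j.+1 = (k + j).+1 by lia.
rewrite expnS odd_dfactS mulnCA mulnC; apply: leq_mul => //; lia.
Qed.

Lemma key_Rb n t q r : t.+1 <= q -> q <= n -> 4 * r <= 3 * (2 * (n - q) + 1) ->
  3 ^ q * ((2 * (n - q) + 1) ^ t.+1 * n ^ t) <= 4 ^ q ->
  r ^ q * odd_dfact (n - q) * n ^ t <= odd_dfact (n - t.+1).
Proof.
move=> tq qn h4 h3.
set b := 2 * (n - q) + 1.
have ER : n - t.+1 = (n - q) + (q - t.+1) by lia.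
rewrite ER; apply: leq_trans _ (odd_ratio (n - q) (q - t.+1)).
rewrite mulnAC [X in _ <= X]mulnC leq_mul2r; apply/orP; right.
(* r^q * n^t <= b^(q - t.+1) *)
have pos : 0 < 4 ^ q * b ^ t.+1 by rewrite muln_gt0 !expn_gt0 /b; lia.
rewrite -(leq_pmul2r pos).
have Eb : b ^ (q - t.+1) * (4 ^ q * b ^ t.+1) = b ^ q * 4 ^ q.
  by rewrite mulnCA -expnD subnK // mulnC.
rewrite Eb.
have E1 : r ^ q * n ^ t * (4 ^ q * b ^ t.+1) = (4 * r) ^ q * (b ^ t.+1 * n ^ t).
  by rewrite expnMn; ring.
rewrite E1.
apply: leq_trans (leq_mul (exp_mono q h4) (leqnn _)) _.
have E2 : (3 * b) ^ q * (b ^ t.+1 * n ^ t) = b ^ q * (3 ^ q * (b ^ t.+1 * n ^ t)).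
  by rewrite expnMn; ring.
by rewrite E2 leq_mul2l h3 orbT.
Qed.

Lemma ineqs n t N N1 Rb X Y a : N = a * N1 -> Rb * n ^ t <= N1 -> 0 < n -> 0 < a -> 0 < Y ->
  (1 + Y) * (1 + X) <= a -> (a + 1) * (n + 1 + Y) <= a * a -> n * (a + 1 + Y) <= a * a ->
  [/\ Rb * (n ^ t * N) <= N * N,
      (Rb + N1) * (Rb + X * N) <= N * N,
      (Rb + Y * N1) * (Rb + X * N) <= N * N,
      (N + Rb) * (n * N1 + (Rb + Y * N1)) <= N * N &
      n * N1 * (N + (Rb + Y * N1)) <= N * N].
Proof.
move=> EN key n0 a0 Y0 C1 C2 C3.
have nt : 0 < n ^ t by rewrite expn_gt0 n0.
have R1 : Rb <= N1 by apply: leq_trans key; rewrite leq_pmulr.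
have N1N : N1 <= N by rewrite EN leq_pmull.
have NN : N * N = (a * a) * (N1 * N1) by rewrite EN; ring.
have A3 : Rb + Y * N1 <= (1 + Y) * N1 by rewrite mulnDl mul1n leq_add2r.
have B3 : Rb + X * N <= ((1 + X) * a) * N1.
  rewrite EN -mulnA mulnDl mul1n mulnA; apply: leq_add => //.
  by apply: leq_trans R1 _; rewrite leq_pmull.
have I3 : (Rb + Y * N1) * (Rb + X * N) <= N * N.
  apply: leq_trans (leq_mul A3 B3) _.
  have -> : (1 + Y) * N1 * ((1 + X) * a * N1) = ((1 + Y) * (1 + X) * a) * (N1 * N1) by ring.
  rewrite NN leq_mul2r; apply/orP; right; by rewrite leq_mul2r C1 orbT.
split => //.
- rewrite mulnA; apply: leq_trans (leq_mul key (leqnn N)) _; by rewrite leq_mul2r N1N orbT.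
- apply: leq_trans I3; rewrite leq_mul2r; apply/orP; right; rewrite leq_add2l.
  by rewrite leq_pmull.
- have A4 : N + Rb <= (a + 1) * N1 by rewrite EN mulnDl mul1n leq_add2l.
  have B4 : n * N1 + (Rb + Y * N1) <= (n + 1 + Y) * N1.
    by rewrite !mulnDl mul1n -addnA leq_add2l leq_add2r.
  apply: leq_trans (leq_mul A4 B4) _.
  have -> : (a + 1) * N1 * ((n + 1 + Y) * N1) = ((a + 1) * (n + 1 + Y)) * (N1 * N1) by ring.
  by rewrite NN leq_mul2r C2 orbT.
- have B5 : N + (Rb + Y * N1) <= (a + 1 + Y) * N1.
    by rewrite EN !mulnDl mul1n -addnA leq_add2l leq_add2r.
  rewrite -mulnA; apply: leq_trans (leq_mul (leqnn n) (leq_mul (leqnn N1) B5)) _.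
  have -> : n * (N1 * ((a + 1 + Y) * N1)) = (n * (a + 1 + Y)) * (N1 * N1) by ring.
  by rewrite NN leq_mul2r C3 orbT.
Qed.

Unset Implicit Arguments.

Lemma C_from n t X Y : 16 * t + 8 <= n -> 4 * ((1 + Y) * (1 + X)) <= n ->
  let a := 2 * (n - t.+1) + 1 in
  [/\ (1 + Y) * (1 + X) <= a, (a + 1) * (n + 1 + Y) <= a * a & n * (a + 1 + Y) <= a * a].
Proof.
move=> h1 h2 a.
have hY : 4 * (1 + Y) <= n.
  apply: leq_trans h2; rewrite leq_mul2l /=; apply: leq_pmulr; lia.
have ha : 15 * n <= 8 * a by rewrite /a; lia.
have ha2 : a <= 2 * n by rewrite /a; lia.
split.
- rewrite /a; lia.
- have e1 : n + 1 + Y <= 5 * n %/ 4 + 1 by lia.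
  nia.
- nia.
Qed.

Lemma polybound q t : 0 < q ->
  4 * ((1 + (q + q ^ t * q) ^ t.+1) * (1 + q ^ t)) + (5 * q + 1) + (16 * t + 8)
  <= (2 ^ (t + 5) + 16 * t + 14) * q ^ (t + t.+1 * t.+1).
Proof.
move=> q0.
set K := t + t.+1 * t.+1.
have p1 : forall e, 0 < q ^ e by move=> e; rewrite expn_gt0 q0.
have hX : 1 + q ^ t <= 2 * q ^ t by have := p1 t; lia.
have hw : q + q ^ t * q <= 2 * q ^ t.+1.
  rewrite -expnSr; have : q ^ 1 <= q ^ t.+1 by apply: leq_pexp2l.
  rewrite expn1; lia.
have hY : (q + q ^ t * q) ^ t.+1 <= 2 ^ t.+1 * q ^ (t.+1 * t.+1).
  apply: leq_trans (exp_mono t.+1 hw) _; by rewrite expnMn -expnM.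
have hY1 : 1 + (q + q ^ t * q) ^ t.+1 <= 2 ^ t.+2 * q ^ (t.+1 * t.+1).
  have : 1 <= 2 ^ t.+1 * q ^ (t.+1 * t.+1) by rewrite muln_gt0 expn_gt0 p1.
  rewrite [2 ^ t.+2]expnS; lia.
have H1 : 4 * ((1 + (q + q ^ t * q) ^ t.+1) * (1 + q ^ t)) <= 2 ^ (t + 5) * q ^ K.
  apply: leq_trans (leq_mul (leqnn 4) (leq_mul hY1 hX)) _.
  have -> : 2 ^ (t + 5) * q ^ K = 4 * (2 ^ t.+2 * q ^ (t.+1 * t.+1) * (2 * q ^ t)).
    have e1 : 2 ^ (t + 5) = 32 * 2 ^ t by rewrite expnD mulnC.
    have e2 : 2 ^ t.+2 = 4 * 2 ^ t by rewrite !expnS mulnA.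
    have e3 : q ^ K = q ^ t * q ^ (t.+1 * t.+1) by rewrite /K expnD.
    rewrite e1 e2 e3; ring.
  by [].
have qK : q <= q ^ K by rewrite -{1}(expn1 q); apply: leq_pexp2l => //; rewrite /K; lia.
have H2 : 5 * q + 1 <= 6 * q ^ K by have := p1 K; lia.
have H3 : 16 * t + 8 <= (16 * t + 8) * q ^ K by apply: leq_pmulr.
have := leq_add (leq_add H1 H2) H3.
have -> : 2 ^ (t + 5) * q ^ K + 6 * q ^ K + (16 * t + 8) * q ^ K = (2 ^ (t + 5) + 16 * t + 14) * q ^ K by ring.
by [].
Qed.

Lemma arith t : 0 < t -> exists n0, forall n, n0 <= n ->
  exists r q Rb, [/\ 0 < r, n + q < r, r ^ q * odd_dfact (n - q) <= Rb &
    let N := odd_dfact (n - t) in let N1 := odd_dfact (n - t.+1) in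
    let X := q ^ t in let Y := (q + q ^ t * q) ^ t.+1 in
    [/\ Rb * (n ^ t * N) <= N * N,
      (Rb + N1) * (Rb + X * N) <= N * N,
      (Rb + Y * N1) * (Rb + X * N) <= N * N,
      (N + Rb) * (n * N1 + (Rb + Y * N1)) <= N * N &
      n * N1 * (N + (Rb + Y * N1)) <= N * N]].
Proof.
move=> t0.
pose K := t + t.+1 * t.+1.
pose c0 := 5 * (2 * t + 1).
pose C := 4 * ((2 ^ (t + 5) + 16 * t + 14) * c0 ^ K).
have [M0 HM0] := poly_exp C K.
exists (2 ^ M0) => n hn.
have n0 : 0 < n by apply: leq_trans hn; rewrite expn_gt0.
pose L := trunc_log 2 n.
have hL : M0 <= L by apply: trunc_log_max.
have hL1 : 2 ^ L <= n by apply: trunc_logP.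
have hL2 : n < 2 ^ L.+1 by apply: trunc_log_ltn.
pose M := L.+2.
pose q := c0 * M.
pose r := n + q + 1.
exists r, q, (r ^ q * odd_dfact (n - q)).
have q0 : 0 < q by rewrite /q /c0 /M; lia.
have PB := polybound q t q0.
have PM : C * M ^ K <= 2 ^ M by apply: HM0; rewrite /M; lia.
have EqK : q ^ K = c0 ^ K * M ^ K by rewrite /q expnMn.
have E2M : 2 ^ M = 4 * 2 ^ L by rewrite /M !expnS mulnA.
set P := 4 * _ + _ + _ in PB.
have Pn : P <= n.
  have : 4 * P <= 4 * 2 ^ L.
    rewrite -E2M; apply: leq_trans PM; rewrite /C -mulnA leq_mul2l /=.
    by apply: leq_trans PB _; rewrite EqK mulnA.
  rewrite leq_mul2l /= => H; exact: leq_trans H hL1.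
have h5q : 5 * q + 1 <= n by move: Pn; rewrite /P; lia.
have h16 : 16 * t + 8 <= n by move: Pn; rewrite /P; lia.
have h4 : 4 * ((1 + (q + q ^ t * q) ^ t.+1) * (1 + q ^ t)) <= n by move: Pn; rewrite /P; lia.
have tq : t.+1 <= q by rewrite /q /c0 /M; nia.
split; [by rewrite /r; lia | by rewrite /r; lia | by [] | ].
move=> N N1 X Y.
have key : r ^ q * odd_dfact (n - q) * n ^ t <= N1.
  apply: key_Rb => //; first by lia.
    by rewrite /r; lia.
  set b := 2 * (n - q) + 1.
  have bM : b <= 2 ^ M by rewrite /b E2M; rewrite expnS in hL2; lia.
  have nM : n <= 2 ^ M by rewrite E2M; lia.
  pose c := (2 * t + 1) * M.
  have Eq : q = 5 * c by rewrite /q /c /c0 mulnA.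
  apply: leq_trans (_ : 3 ^ q * 2 ^ c <= _).
    rewrite leq_mul2l; apply/orP; right.
    have -> : 2 ^ c = (2 ^ M) ^ t.+1 * (2 ^ M) ^ t.
      by rewrite -!expnM -expnD /c; congr (2 ^ _); ring.
    by apply: leq_mul; apply: exp_mono.
  rewrite Eq !expnM -expnMn; apply: exp_mono => //.
  by rewrite -expnMn; apply: exp_mono.
have EN : N = (2 * (n - t.+1) + 1) * N1.
  rewrite /N /N1 mulnC -odd_dfactS; congr odd_dfact; lia.
have Y0 : 0 < Y by rewrite /Y expn_gt0; lia.
have [C1 C2 C3] := @C_from n t (q ^ t) Y h16 h4.
have a0 : 0 < 2 * (n - t.+1) + 1 by lia.
exact: (@ineqs n t N N1 _ X Y _ EN key n0 a0 Y0 C1 C2 C3).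
Qed.

Unset Implicit Arguments.

Theorem mainTheorem7 :
  forall t : nat, exists n0 : nat, forall n : nat, n0 <= n ->
  forall F G : {set {set {set 'I_(2 * n)}}},
    F \subset matchings n -> G \subset matchings n ->
    cross_intersecting n t F G ->
    #|F| * #|G| <= (odd_dfact (n - t)) ^ 2.
Proof.
case=> [|t].
  exists 0 => n _ F G FM GM _.
  have hM : #|matchings n| <= odd_dfact (n - 0).
    have E : star n set0 = matchings n by apply/setP => m; rewrite inE sub0set andbT.
    by have := star_count n set0; rewrite E cards0.
  rewrite -mulnn; apply: leq_mul; exact: leq_trans (subset_leq_card _) hM.
have [n0 Hn0] := arith t.+1 (ltn0Sn t).
exists n0 => n hn F G FM GM cr.
have [r [q [Rb [r0 rbig hRb [I1 I2 I3 I4 I5]]]]] := Hn0 n hn.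
rewrite -mulnn.
exact: (combin r0 rbig hRb erefl erefl erefl erefl FM GM cr I1 I2 I3 I4 I5).
Qed.
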